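(* Let $g_1,g_2$ be independent exponential random variables with means $\varepsilon_1,\varepsilon_2>0$, let $P_s,P_d,\sigma^2>0$ and $R_d>0$, and put $\gamma_o=2^{2R_d}-1$. Then the connection outage probability of amplify-and-forward relaying, $$p_o^{\mathrm{AF}}=\Pr\Big(\frac{P_s^2g_1g_2}{\sigma^2[P_sg_1+(P_s+P_d)g_2+\sigma^2]}<\gamma_o\Big),$$ equals $$1-e^{-\frac{\gamma_o\sigma^2}{P_s}\left(\frac{P_s+P_d}{P_s\varepsilon_1}+\frac1{\varepsilon_2}\right)}\,z\,K_1(z),\qquad z=\frac{2\gamma_o\sigma^2}{P_s}\sqrt{\frac{1}{\varepsilon_1\varepsilon_2}\Big(\frac{P_s+P_d}{P_s}+\frac1{\gamma_o}\Big)},$$ where $K_1$ is the first-order modified Bessel function of the second kind.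
   Context: In amplify-and-forward (AF) relaying the relay scales its received signal $h_1x_s+h_2x_d+n_r$ by $\tau=\sqrt{P_s/(g_1P_s+g_2P_d+\sigma^2)}$ and forwards it; after the destination removes its own known artificial noise, the end-to-end SNR is $\frac{P_s^2g_1g_2}{\sigma^2[P_sg_1+P_sg_2+P_dg_2+\sigma^2]}$. Here $g_i=|h_i|^2$, $h_i\sim\mathcal{CN}(0,\varepsilon_i)$ independent, $P_s$ the source/relay power, $P_d$ the destination's artificial-noise power, $\sigma^2$ the noise variance. *)

(* Defs.v *)
From Stdlib Require Import Reals Lra.
Open Scope R_scope.

Definition improper_int0 (f : R -> R) (L : R) : Prop :=
  exists pr : forall b : R, 0 <= b -> Riemann_integrable f 0 b,
    forall eps : R, 0 < eps ->
      exists M : R, 0 <= M /\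
        forall (b : R) (Hb : 0 <= b), M <= b ->
          Rabs (RiemannInt (pr b Hb) - L) < eps.

(* Modified Bessel function of the second kind of order 1, via its standard
   integral representation  K_1(z) = int_0^oo exp(-z cosh t) cosh t dt  (z > 0). *)
Definition is_BesselK1 (z k : R) : Prop :=
  improper_int0 (fun t => exp (- z * cosh t) * cosh t) k.

Definition exp_pdf (eps x : R) : R := / eps * exp (- x / eps).

Definition af_snr (Ps Pd sigma2 x y : R) : R :=
  Ps ^ 2 * x * y / (sigma2 * (Ps * x + (Ps + Pd) * y + sigma2)).

Definition indic_lt (a b : R) : R := if Rlt_dec a b then 1 else 0.

(* Pr( SNR(g1,g2) < gamma ) = p, for independent g1 ~ Exp(mean e1),
   g2 ~ Exp(mean e2), written as the iterated integral
   int_0^oo f1(x) ( int_0^oo 1{SNR(x,y) < gamma} f2(y) dy ) dx = p. *)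
Definition af_outage_prob_is (e1 e2 Ps Pd sigma2 gamma p : R) : Prop :=
  exists inner : R -> R,
    (forall x, 0 <= x ->
       improper_int0 (fun y => indic_lt (af_snr Ps Pd sigma2 x y) gamma * exp_pdf e2 y)
                     (inner x)) /\
    improper_int0 (fun x => exp_pdf e1 x * inner x) p.

(* Main.v *)
Require Import Defs.
From Stdlib Require Import Reals Lra Classical.
From Coquelicot Require Import Coquelicot.
Open Scope R_scope.

Definition conv (F : R -> R) (L : R) : Prop :=
  forall eps, 0 < eps -> exists M, forall b, M <= b -> Rabs (F b - L) < eps.

Lemma bridge f L : (forall b, 0 <= b -> ex_RInt f 0 b) ->
  conv (fun b => RInt f 0 b) L -> improper_int0 f L.
Proof.
  intros Hex Hc. exists (fun b Hb => ex_RInt_Reals_0 _ _ _ (Hex b Hb)).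
  intros eps He. destruct (Hc eps He) as [M HM]. exists (Rmax M 0). split.
  apply Rmax_r. intros b Hb HMb. rewrite <- RInt_Reals. apply HM.
  eapply Rle_trans; [apply Rmax_l|exact HMb].
Qed.

Lemma mono_conv (F : R -> R) (M : R) :
  (forall a b, 0 <= a -> a <= b -> F a <= F b) ->
  (forall b, 0 <= b -> F b <= M) -> exists L, conv F L.
Proof.
  intros Hm Hb.
  set (E := fun y => exists b, 0 <= b /\ y = F b).
  assert (HB : bound E). { exists M. intros y [b [H0 ->]]. auto. }
  assert (HE : exists x, E x). { exists (F 0). exists 0. split; lra. }
  destruct (completeness E HB HE) as [L [HL1 HL2]].
  exists L. intros eps He.
  assert (Hn : ~ is_upper_bound E (L - eps)).
  { intros Hu. specialize (HL2 _ Hu). lra. }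
  apply not_all_ex_not in Hn. destruct Hn as [y Hy].
  apply imply_to_and in Hy. destruct Hy as [[b0 [Hb0 ->]] Hlt].
  exists b0. intros b Hbb.
  assert (F b0 <= F b) by (apply Hm; lra).
  assert (F b <= L) by (apply HL1; exists b; split; [lra|reflexivity]).
  apply Rabs_def1; lra.
Qed.

Lemma conv_plus F G a c : conv F a -> conv G c -> conv (fun b => F b + G b) (a + c).
Proof.
  intros HF HG eps He. destruct (HF (eps/2)) as [M1 H1]; [lra|].
  destruct (HG (eps/2)) as [M2 H2]; [lra|]. exists (Rmax M1 M2). intros b Hb.
  specialize (H1 b (Rle_trans _ _ _ (Rmax_l _ _) Hb)).
  specialize (H2 b (Rle_trans _ _ _ (Rmax_r _ _) Hb)).
  replace (F b + G b - (a + c)) with ((F b - a) + (G b - c)) by ring.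
  eapply Rle_lt_trans; [apply Rabs_triang|]. lra.
Qed.

Lemma conv_scal F a k : conv F a -> conv (fun b => k * F b) (k * a).
Proof.
  intros HF eps He. destruct (HF (eps / (Rabs k + 1))) as [M HM].
  { apply Rdiv_lt_0_compat; [lra|]. pose proof (Rabs_pos k); lra. }
  exists M. intros b Hb. specialize (HM b Hb).
  replace (k * F b - k * a) with (k * (F b - a)) by ring. rewrite Rabs_mult.
  pose proof (Rabs_pos k). pose proof (Rabs_pos (F b - a)).
  apply Rmult_lt_compat_r with (r := Rabs k + 1) in HM; [|lra].
  unfold Rdiv in HM. rewrite Rmult_assoc, Rinv_l in HM by lra. nra.
Qed.

Lemma conv_ext F G a : (exists M, forall b, M <= b -> F b = G b) -> conv F a -> conv G a.
Proof.
  intros [M0 H0] HF eps He. destruct (HF eps He) as [M HM]. exists (Rmax M M0).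
  intros b Hb. rewrite <- H0 by (eapply Rle_trans; [apply Rmax_r|exact Hb]).
  apply HM. eapply Rle_trans; [apply Rmax_l|exact Hb].
Qed.

Lemma conv_const a : conv (fun _ => a) a.
Proof. intros eps He. exists 0. intros. rewrite Rminus_diag, Rabs_R0. lra. Qed.

Lemma conv_exp_neg c : 0 < c -> conv (fun b => exp (- b / c)) 0.
Proof.
  intros Hc eps He. exists (c / eps). intros b Hb.
  rewrite Rminus_0_r, Rabs_pos_eq by (left; apply exp_pos).
  assert (Hb0 : 0 < b). { eapply Rlt_le_trans; [|exact Hb]. apply Rdiv_lt_0_compat; lra. }
  assert (H1 : 1 + b / c < exp (b / c)) by (apply exp_ineq1; apply Rgt_not_eq, Rdiv_lt_0_compat; lra).
  replace (- b / c) with (- (b / c)) by (unfold Rdiv; ring). rewrite exp_Ropp.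
  assert (c / eps <= b) by exact Hb.
  assert (c <= b * eps). { apply Rmult_le_compat_r with (r := eps) in Hb; [|lra].
    unfold Rdiv in Hb. rewrite Rmult_assoc, Rinv_l in Hb by lra. lra. }
  assert (b / c * eps >= 1). { unfold Rdiv. apply Rle_ge.
    apply Rmult_le_reg_l with c; [lra|]. replace (c * (b * / c * eps)) with (b*eps) by (field; lra). lra. }
  apply Rmult_lt_reg_l with (exp (b/c)). apply exp_pos.
  rewrite Rinv_r by (apply Rgt_not_eq, exp_pos). nra.
Qed.

Lemma exp_pdf_int e a b : 0 < e -> is_RInt (exp_pdf e) a b (exp (- a / e) - exp (- b / e)).
Proof.
  intros He.
  replace (exp (- a / e) - exp (- b / e)) with
    (minus ((fun y => - exp (- y / e)) b) ((fun y => - exp (- y / e)) a))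
    by (unfold minus, plus, opp; simpl; ring).
  apply (is_RInt_derive (fun y => - exp (- y / e)) (exp_pdf e)).
  - intros x _. unfold exp_pdf. auto_derive; [auto|]. unfold Rdiv. ring.
  - intros x _. unfold exp_pdf. apply (ex_derive_continuous (fun x => / e * exp (- x / e))). auto_derive. auto.
Qed.

Lemma step_int (g f : R -> R) k b : 0 < k ->
  (forall y, 0 < y < k -> g y = f y) -> (forall y, k < y -> g y = 0) ->
  (forall a c, ex_RInt f a c) -> 0 <= b ->
  ex_RInt g 0 b /\ (k <= b -> RInt g 0 b = RInt f 0 k).
Proof.
  intros Hk H1 H2 Hf Hb.
  assert (E1 : forall c, 0 <= c <= k -> ex_RInt g 0 c /\ RInt g 0 c = RInt f 0 c).
  { intros c Hc. split.
    - apply ex_RInt_ext with f; [|apply Hf]. intros y Hy.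
      rewrite Rmin_left in Hy by lra. rewrite Rmax_right in Hy by lra. symmetry; apply H1; lra.
    - apply RInt_ext. intros y Hy.
      rewrite Rmin_left in Hy by lra. rewrite Rmax_right in Hy by lra. apply H1; lra. }
  destruct (Rle_dec b k) as [Hbk|Hbk].
  - split; [apply E1; lra|]. intros. replace b with k by lra. apply E1; lra.
  - assert (E2 : ex_RInt g k b /\ RInt g k b = 0).
    { assert (Hz : forall y, Rmin k b < y < Rmax k b -> (fun _ => 0) y = g y).
      { intros y Hy. rewrite Rmin_left in Hy by lra. symmetry; apply H2; lra. }
      split.
      - apply ex_RInt_ext with (fun _ => 0); [exact Hz|]. apply ex_RInt_const.
      - rewrite <- (RInt_ext _ _ _ _ Hz). rewrite RInt_const.
        unfold scal; simpl; unfold mult; simpl; ring. }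
    destruct (E1 k) as [Ek Ek']; [lra|]. destruct E2 as [E2 E2'].
    split.
    + eapply ex_RInt_Chasles; eauto.
    + intros _. rewrite <- (RInt_Chasles g 0 k b Ek E2). rewrite E2', Ek'.
      unfold plus; simpl; ring.
Qed.

Definition dd Ps Pd s2 g := g*s2*(Ps+Pd)/Ps^2.
Definition kap Ps Pd s2 g x := g*s2*(Ps*x+s2)/(Ps^2*x - g*s2*(Ps+Pd)).

Lemma div_lt_iff N Q g : 0 < Q -> (N / Q < g <-> N < g * Q).
Proof.
  intros HQ. split; intros H.
  - apply Rmult_lt_compat_r with (r:=Q) in H; [|lra].
    unfold Rdiv in H; rewrite Rmult_assoc, Rinv_l in H by lra. lra.
  - apply Rmult_lt_reg_r with Q; [lra|]. unfold Rdiv; rewrite Rmult_assoc, Rinv_l by lra. lra.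
Qed.

Lemma snr_iff Ps Pd s2 g x y : 0 < Ps -> 0 < Pd -> 0 < s2 -> 0 <= x -> 0 <= y ->
  (af_snr Ps Pd s2 x y < g <-> y * (Ps^2*x - g*s2*(Ps+Pd)) < g*s2*(Ps*x+s2)).
Proof.
  intros. unfold af_snr. rewrite div_lt_iff.
  - split; intros; nra.
  - apply Rmult_lt_0_compat; nra.
Qed.

Lemma dd_iff Ps Pd s2 g x : 0 < Ps -> (x <= dd Ps Pd s2 g <-> Ps^2*x - g*s2*(Ps+Pd) <= 0).
Proof.
  intros HP. unfold dd. assert (HP2 : 0 < Ps^2) by nra. split; intros H.
  - apply Rmult_le_compat_r with (r := Ps^2) in H; [|lra].
    unfold Rdiv in H. rewrite Rmult_assoc, Rinv_l in H by lra. lra.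
  - apply Rmult_le_reg_r with (Ps^2); [lra|]. unfold Rdiv.
    rewrite Rmult_assoc, Rinv_l by lra. lra.
Qed.

Lemma snr_small Ps Pd s2 g x y : 0 < Ps -> 0 < Pd -> 0 < s2 -> 0 < g -> 0 <= x ->
  x <= dd Ps Pd s2 g -> 0 <= y -> af_snr Ps Pd s2 x y < g.
Proof.
  intros HPs HPd Hs2 Hg Hx Hd Hy. apply snr_iff; auto. apply dd_iff in Hd; auto.
  assert (y * (Ps^2*x - g*s2*(Ps+Pd)) <= 0) by (apply Rmult_le_0_l; lra).
  assert (0 < g*s2*(Ps*x+s2)) by (apply Rmult_lt_0_compat; [apply Rmult_lt_0_compat|]; nra).
  lra.
Qed.

Lemma snr_large Ps Pd s2 g x y : 0 < Ps -> 0 < Pd -> 0 < s2 -> 0 < g ->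
  dd Ps Pd s2 g < x -> 0 <= y -> (af_snr Ps Pd s2 x y < g <-> y < kap Ps Pd s2 g x).
Proof.
  intros H H0 H1 H2 H3 H4. assert (0 <= x). { unfold dd in H3. assert (0 < g*s2*(Ps+Pd)/Ps^2).
    { apply Rdiv_lt_0_compat; [|nra]. apply Rmult_lt_0_compat; nra. } lra. }
  assert (Hc : 0 < Ps^2*x - g*s2*(Ps+Pd)).
  { destruct (Rlt_or_le 0 (Ps^2*x - g*s2*(Ps+Pd))) as [H6|H6]; auto.
    apply (dd_iff Ps Pd s2 g x) in H6; auto. lra. }
  rewrite snr_iff by auto. unfold kap.
  split; intros Hy.
  - apply Rmult_lt_reg_r with (Ps^2*x - g*s2*(Ps+Pd)); auto.
    replace (g * s2 * (Ps * x + s2) / (Ps ^ 2 * x - g * s2 * (Ps + Pd)) * (Ps ^ 2 * x - g * s2 * (Ps + Pd)))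
      with (g * s2 * (Ps * x + s2)) by (field; lra). lra.
  - apply Rmult_lt_compat_r with (r := Ps^2*x - g*s2*(Ps+Pd)) in Hy; auto.
    replace (g * s2 * (Ps * x + s2) / (Ps ^ 2 * x - g * s2 * (Ps + Pd)) * (Ps ^ 2 * x - g * s2 * (Ps + Pd)))
      with (g * s2 * (Ps * x + s2)) in Hy by (field; lra). lra.
Qed.

Definition inner e2 Ps Pd s2 g x :=
  if Rle_dec x (dd Ps Pd s2 g) then 1 else 1 - exp (- kap Ps Pd s2 g x / e2).

Lemma inner_ok e2 Ps Pd s2 g x : 0 < e2 -> 0 < Ps -> 0 < Pd -> 0 < s2 -> 0 < g -> 0 <= x ->
  improper_int0 (fun y => indic_lt (af_snr Ps Pd s2 x y) g * exp_pdf e2 y)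
                (inner e2 Ps Pd s2 g x).
Proof.
  intros He2 HPs HPd Hs2 Hg Hx.
  assert (Hf : forall a c, ex_RInt (exp_pdf e2) a c).
  { intros a c. eexists. apply exp_pdf_int; auto. }
  unfold inner. destruct (Rle_dec x (dd Ps Pd s2 g)) as [Hd|Hd].
  - assert (Heq : forall b, 0 <= b -> forall y, Rmin 0 b < y < Rmax 0 b ->
       exp_pdf e2 y = indic_lt (af_snr Ps Pd s2 x y) g * exp_pdf e2 y).
    { intros b Hb y Hy. rewrite Rmin_left in Hy by lra. unfold indic_lt.
      destruct (Rlt_dec _ _) as [_|Hn]; [ring|].
      exfalso. apply Hn. apply snr_small; auto; lra. }
    apply bridge.
    + intros b Hb. eapply ex_RInt_ext; [apply Heq; auto|apply Hf].
    + apply conv_ext with (fun b => 1 - exp (- b / e2)).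
      * exists 0. intros b Hb. rewrite <- (RInt_ext _ _ _ _ (Heq b Hb)).
        symmetry. rewrite (is_RInt_unique _ _ _ _ (exp_pdf_int e2 0 b He2)).
        replace (- 0 / e2) with 0 by (unfold Rdiv; ring). rewrite exp_0. ring.
      * assert (HC : conv (fun b => 1 + -1 * exp (- b / e2)) (1 + -1 * 0))
          by (apply conv_plus; [apply conv_const| apply conv_scal, conv_exp_neg; auto]).
        replace (1 + -1 * 0) with 1 in HC by ring. eapply conv_ext; [|exact HC].
        exists 0; intros; ring.
  - apply Rnot_le_lt in Hd.
    set (k := kap Ps Pd s2 g x).
    assert (Hc : 0 < Ps^2*x - g*s2*(Ps+Pd)).
    { destruct (Rlt_or_le 0 (Ps^2*x - g*s2*(Ps+Pd))); auto.
      apply (dd_iff Ps Pd s2 g x) in H; auto. lra. }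
    assert (Hk : 0 < k). { unfold k, kap. apply Rdiv_lt_0_compat; auto.
      apply Rmult_lt_0_compat; nra. }
    assert (ST : forall b, 0 <= b -> ex_RInt (fun y => indic_lt (af_snr Ps Pd s2 x y) g * exp_pdf e2 y) 0 b /\
       (k <= b -> RInt (fun y => indic_lt (af_snr Ps Pd s2 x y) g * exp_pdf e2 y) 0 b = RInt (exp_pdf e2) 0 k)).
    { intros b Hb. apply step_int; auto.
      - intros y Hy. unfold indic_lt. destruct (Rlt_dec _ _) as [_|Hn]; [ring|].
        exfalso. apply Hn. apply snr_large; auto; try lra. exact (proj2 Hy).
      - intros y Hy. unfold indic_lt. destruct (Rlt_dec _ _) as [Hl|_]; [|ring].
        apply snr_large in Hl; auto; fold k in Hl; lra. }
    apply bridge.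
    + intros b Hb. apply ST; auto.
    + apply conv_ext with (fun _ => 1 - exp (- k / e2)); [|apply conv_const].
      exists k. intros b Hb. rewrite (proj2 (ST b ltac:(lra)) Hb).
      rewrite (is_RInt_unique _ _ _ _ (exp_pdf_int e2 0 k He2)).
      replace (- 0 / e2) with 0 by (unfold Rdiv; ring). rewrite exp_0. ring.
Qed.

Lemma exp_le_mono x y : x <= y -> exp x <= exp y.
Proof. intros [H|H]; [left; apply exp_increasing; auto|subst; lra]. Qed.

Definition hh al be u := if Rlt_dec 0 u then exp (- (al * u) - be / u) else 0.

Lemma hh_small al be u : 0 < al -> 0 < be -> 0 < u -> hh al be u < u / be.
Proof.
  intros Ha Hb Hu. unfold hh. destruct (Rlt_dec 0 u); [|lra].
  eapply Rle_lt_trans. apply exp_le_mono with (y := - (be / u)).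
  { assert (0 < al * u) by nra. lra. }
  rewrite exp_Ropp.
  assert (H1 : 1 + be / u <= exp (be / u)) by apply exp_ineq1_le.
  assert (H2 : 0 < be / u) by (apply Rdiv_lt_0_compat; lra).
  replace (u / be) with (/ (be / u)) by (field; lra).
  apply Rinv_lt_contravar. apply Rmult_lt_0_compat; auto; apply exp_pos. lra.
Qed.

Lemma hh_nonneg al be u : 0 <= hh al be u.
Proof. unfold hh. destruct (Rlt_dec 0 u); [left; apply exp_pos|lra]. Qed.

Lemma hh_le1 al be u : 0 < al -> 0 < be -> hh al be u <= 1.
Proof.
  intros. unfold hh. destruct (Rlt_dec 0 u); [|lra]. rewrite <- exp_0. apply exp_le_mono.
  assert (0 < al*u) by nra. assert (0 < be/u) by (apply Rdiv_lt_0_compat; lra). lra.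
Qed.

Lemma hh_le_exp al be u : 0 < al -> 0 < be -> hh al be u <= / al * exp_pdf (/ al) u.
Proof.
  intros. unfold hh, exp_pdf. rewrite Rinv_inv. rewrite <- Rmult_assoc, Rinv_l by lra.
  rewrite Rmult_1_l. destruct (Rlt_dec 0 u); [|left; apply exp_pos]. apply exp_le_mono.
  replace (- u / / al) with (- (al * u)) by (field; lra).
  assert (0 < be/u) by (apply Rdiv_lt_0_compat; lra). lra.
Qed.

Lemma hh_cont al be u : 0 < al -> 0 < be -> continuous (hh al be) u.
Proof.
  intros Ha Hb. apply continuity_pt_filterlim.
  destruct (Rlt_or_le 0 u) as [Hu|Hu].
  - apply continuity_pt_locally_ext with (f := fun y => exp (- (al * y) - be / y)) (a := u); auto.
    + intros y Hy. unfold hh. unfold Rdist in Hy. destruct (Rlt_dec 0 y); auto.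
      exfalso. apply Rabs_def2 in Hy. lra.
    + apply continuity_pt_filterlim.
      apply (ex_derive_continuous (fun y => exp (- (al * y) - be / y))).
      auto_derive. lra.
  - intros eps He. exists (eps * be). split; [nra|].
    intros y [_ Hy]. simpl in Hy. unfold Rdist in Hy |- *. simpl.
    assert (hu : hh al be u = 0) by (unfold hh; destruct (Rlt_dec 0 u); lra).
    rewrite hu. unfold Rdist. rewrite Rminus_0_r, Rabs_pos_eq by apply hh_nonneg.
    destruct (Rlt_or_le 0 y) as [Hy0|Hy0].
    + apply Rabs_def2 in Hy. eapply Rlt_le_trans; [apply hh_small; auto|].
      apply Rmult_le_reg_r with be; auto. unfold Rdiv; rewrite Rmult_assoc, Rinv_l by lra. lra.
    + unfold hh. destruct (Rlt_dec 0 y); lra.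
Qed.

Lemma hh_ex al be a b : 0 < al -> 0 < be -> ex_RInt (hh al be) a b.
Proof. intros. apply (@ex_RInt_continuous R_CompleteNormedModule). intros. apply hh_cont; auto. Qed.

Lemma hh_sub al z t : 0 < al -> 0 < z ->
  hh al (z^2/(4*al)) (z/(2*al) * exp t) = exp (- z * cosh t) /\
  hh al (z^2/(4*al)) (z/(2*al) * exp (- t)) = exp (- z * cosh t).
Proof.
  intros Ha Hz. assert (0 < z/(2*al)) by (apply Rdiv_lt_0_compat; lra).
  pose proof (exp_pos t). pose proof (exp_pos (-t)).
  unfold hh, cosh. split; (destruct (Rlt_dec _ _) as [_|Hn]; [|exfalso; apply Hn; nra]);
  f_equal; rewrite exp_Ropp; field; split; lra.
Qed.

Lemma sub1 al z T : 0 < al -> 0 < z ->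
  RInt (hh al (z^2/(4*al))) (z/(2*al)) (z/(2*al) * exp T)
  = RInt (fun t => exp (- z * cosh t) * (z/(2*al) * exp t)) 0 T.
Proof.
  intros Ha Hz. set (s := z/(2*al)). set (be := z^2/(4*al)).
  assert (Hbe : 0 < be) by (unfold be; apply Rdiv_lt_0_compat; nra).
  assert (E := RInt_comp (hh al be) (fun t => s * exp t) (fun t => s * exp t) 0 T).
  simpl in E. rewrite exp_0, Rmult_1_r in E. rewrite <- E.
  - apply RInt_ext. intros x _. unfold scal; simpl; unfold mult; simpl.
    unfold s, be. rewrite (proj1 (hh_sub al z x Ha Hz)). ring.
  - intros. apply hh_cont; auto.
  - intros x _. split.
    + auto_derive; auto. ring.
    + apply (ex_derive_continuous (fun t => s * exp t)). auto_derive. auto.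
Qed.

Lemma sub2 al z T : 0 < al -> 0 < z ->
  RInt (hh al (z^2/(4*al))) (z/(2*al) * exp (- T)) (z/(2*al))
  = RInt (fun t => exp (- z * cosh t) * (z/(2*al) * exp (- t))) 0 T.
Proof.
  intros Ha Hz. set (s := z/(2*al)). set (be := z^2/(4*al)).
  assert (Hbe : 0 < be) by (unfold be; apply Rdiv_lt_0_compat; nra).
  assert (E := RInt_comp (hh al be) (fun t => s * exp (- t)) (fun t => - (s * exp (- t))) 0 T).
  simpl in E. rewrite Ropp_0, exp_0, Rmult_1_r in E.
  rewrite <- (opp_RInt_swap (hh al be)) by (apply hh_ex; auto).
  rewrite <- E.
  - rewrite <- (RInt_opp (V:=R_CompleteNormedModule)).
    + apply RInt_ext. intros x _. unfold scal, opp; simpl; unfold mult; simpl.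
      unfold s, be. rewrite (proj2 (hh_sub al z x Ha Hz)). ring.
    + apply ex_RInt_ext with (fun y => - (s * exp (- y)) * exp (- z * cosh y)).
      * intros y _. unfold scal; simpl; unfold mult; simpl.
        unfold s, be. rewrite (proj2 (hh_sub al z y Ha Hz)). reflexivity.
      * apply (@ex_RInt_continuous R_CompleteNormedModule). intros.
        apply (ex_derive_continuous (fun y => - (s * exp (- y)) * exp (- z * cosh y))).
        unfold cosh. auto_derive. auto.
  - intros. apply hh_cont; auto.
  - intros x _. split.
    + auto_derive; auto. ring.
    + apply (ex_derive_continuous (fun t => - (s * exp (- t)))). auto_derive. auto.
Qed.

Definition kf z t := exp (- z * cosh t) * cosh t.
Definition Kint z T : R := RInt (kf z) 0 T.

Lemma kf_ex z a b : ex_RInt (kf z) a b.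
Proof.
  apply (@ex_RInt_continuous R_CompleteNormedModule). intros.
  apply (ex_derive_continuous (kf z)). unfold kf, cosh. auto_derive. auto.
Qed.

Lemma sum_sub al z T : 0 < al -> 0 < z ->
  RInt (hh al (z^2/(4*al))) (z/(2*al) * exp (- T)) (z/(2*al) * exp T)
  = 2 * (z/(2*al)) * Kint z T.
Proof.
  intros Ha Hz. assert (Hbe : 0 < z^2/(4*al)) by (apply Rdiv_lt_0_compat; nra).
  rewrite <- (RInt_Chasles (hh al (z^2/(4*al))) _ (z/(2*al))) by (apply hh_ex; auto).
  rewrite sub1, sub2 by auto. unfold plus; simpl.
  assert (ex1 : forall f : R -> R, (forall t, continuous f t) -> ex_RInt f 0 T).
  { intros f Hf. apply (@ex_RInt_continuous R_CompleteNormedModule). intros; apply Hf. }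
  rewrite <- (RInt_plus (V:=R_CompleteNormedModule)).
  - unfold Kint. rewrite <- (RInt_scal (V:=R_CompleteNormedModule)) by apply kf_ex.
    apply RInt_ext. intros x _. unfold plus, scal, kf, cosh; simpl; unfold mult; simpl.
    field. lra.
  - apply ex1. intros t. apply (ex_derive_continuous (fun t => exp (- z * cosh t) * (z / (2 * al) * exp (- t)))).
    unfold cosh. auto_derive. auto.
  - apply ex1. intros t. apply (ex_derive_continuous (fun t => exp (- z * cosh t) * (z / (2 * al) * exp t))).
    unfold cosh. auto_derive. auto.
Qed.

Lemma core al z : 0 < al -> 0 < z ->
  exists K, is_BesselK1 z K /\
    conv (fun b => RInt (hh al (z^2/(4*al))) 0 b) (z / al * K).
Proof.
  intros Ha Hz. set (be := z^2/(4*al)). set (s := z/(2*al)).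
  assert (Hbe : 0 < be) by (unfold be; apply Rdiv_lt_0_compat; nra).
  assert (Hs : 0 < s) by (unfold s; apply Rdiv_lt_0_compat; nra).
  set (H := fun b => RInt (hh al be) 0 b).
  assert (Hex : forall a b, ex_RInt (hh al be) a b) by (intros; apply hh_ex; auto).
  assert (Hch : forall a b, H b = H a + RInt (hh al be) a b).
  { intros a b. unfold H. rewrite <- (RInt_Chasles (hh al be) 0 a b) by auto. reflexivity. }
  assert (Hpos : forall a b, a <= b -> 0 <= RInt (hh al be) a b).
  { intros a b Hab. apply RInt_ge_0; auto. intros; apply hh_nonneg. }
  assert (Hsmall : forall c, 0 <= c -> H c <= c).
  { intros c Hc. unfold H. replace c with (RInt (fun _ => 1) 0 c) at 2.
    - apply RInt_le; auto. apply ex_RInt_const. intros; apply hh_le1; auto.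
    - rewrite RInt_const. unfold scal; simpl; unfold mult; simpl. ring. }
  assert (Hbound : forall b, 0 <= b -> H b <= / al).
  { intros b Hb. unfold H.
    assert (I1 := is_RInt_scal _ _ _ (/ al) _ (exp_pdf_int (/ al) 0 b ltac:(apply Rinv_0_lt_compat; auto))).
    eapply Rle_trans. apply (RInt_le _ (fun y => scal (/ al) (exp_pdf (/ al) y))); auto.
    - eexists; exact I1.
    - intros x _. unfold scal; simpl; unfold mult; simpl. apply hh_le_exp; auto.
    - erewrite is_RInt_unique; [|exact I1].
      unfold scal; simpl; unfold mult; simpl.
      replace (- 0 / / al) with 0 by (unfold Rdiv; ring). rewrite exp_0.
      pose proof (exp_pos (- b / / al)). assert (0 < / al) by (apply Rinv_0_lt_compat; auto).
      nra. }
  destruct (mono_conv H (/ al)) as [L HL].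
  { intros a b Ha0 Hab. rewrite (Hch a b). pose proof (Hpos a b Hab). lra. }
  { exact Hbound. }
  assert (HK : conv (Kint z) (L / (2 * s))).
  { intros eps He. destruct (HL (eps * s)) as [M HM]; [nra|].
    exists (Rmax 0 (Rmax (ln (Rmax M s / s)) (ln (/ eps) + 1))).
    intros T HT.
    assert (T0 : 0 <= T) by (eapply Rle_trans; [apply Rmax_l|exact HT]).
    assert (T1 : ln (Rmax M s / s) <= T)
      by (eapply Rle_trans; [|exact HT]; eapply Rle_trans; [|apply Rmax_r]; apply Rmax_l).
    assert (T2 : ln (/ eps) + 1 <= T)
      by (eapply Rle_trans; [|exact HT]; eapply Rle_trans; [|apply Rmax_r]; apply Rmax_r).
    assert (Hup : M <= s * exp T).
    { assert (0 < Rmax M s / s) by (apply Rdiv_lt_0_compat; auto; eapply Rlt_le_trans; [exact Hs|apply Rmax_r]).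
      apply exp_le_mono in T1. rewrite exp_ln in T1 by auto.
      apply Rmult_le_compat_l with (r := s) in T1; [|lra].
      replace (s * (Rmax M s / s)) with (Rmax M s) in T1 by (field; lra).
      eapply Rle_trans; [apply Rmax_l|exact T1]. }
    assert (Hlow : exp (- T) < eps).
    { assert (exp (- T) < exp (- ln (/ eps))) by (apply exp_increasing; lra).
      rewrite (exp_Ropp (ln (/ eps))), exp_ln in H0 by (apply Rinv_0_lt_compat; auto).
      rewrite Rinv_inv in H0. exact H0. }
    specialize (HM _ Hup).
    assert (Hrel : 2 * s * Kint z T = H (s * exp T) - H (s * exp (- T))).
    { pose proof (Hch (s * exp (- T)) (s * exp T)) as Hc1.
      pose proof (sum_sub al z T Ha Hz) as Hc2. fold be s in Hc2. lra. }
    assert (Hl1 : 0 <= H (s * exp (- T))).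
    { unfold H. apply Hpos. pose proof (exp_pos (- T)). nra. }
    assert (Hl2 : H (s * exp (- T)) < eps * s).
    { eapply Rle_lt_trans. apply Hsmall. pose proof (exp_pos (- T)). nra. nra. }
    assert (E : Kint z T - L / (2 * s) = ((H (s * exp T) - L) - H (s * exp (- T))) / (2 * s)).
    { assert (HK1 : Kint z T = (H (s*exp T) - H (s*exp (-T))) / (2*s)) by (rewrite <- Hrel; field; lra).
      rewrite HK1. field. lra. }
    rewrite E. unfold Rdiv. rewrite Rabs_mult, Rabs_pos_eq with (x := / (2 * s))
      by (left; apply Rinv_0_lt_compat; lra).
    apply Rmult_lt_reg_r with (2 * s); [lra|].
    rewrite Rmult_assoc, Rinv_l, Rmult_1_r by lra.
    eapply Rle_lt_trans; [apply Rabs_triang|]. rewrite Rabs_Ropp, (Rabs_pos_eq (H (s * exp (- T)))) by lra.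
    nra. }
  exists (L / (2 * s)). split.
  - apply bridge; [intros; apply kf_ex|]. exact HK.
  - replace (z / al * (L / (2 * s))) with L by (unfold s; field; split; lra). exact HL.
Qed.

Lemma conv_shift F L d : conv F L -> conv (fun b => F (b - d)) L.
Proof.
  intros HF eps He. destruct (HF eps He) as [M HM]. exists (M + d). intros b Hb.
  apply HM. lra.
Qed.

Lemma expo e1 e2 Ps Pd s2 g x Z2 : 0 < e1 -> 0 < e2 -> 0 < Ps -> 0 < Pd -> 0 < s2 -> 0 < g ->
  Z2 = (2*g*s2/Ps)^2 * (/(e1*e2)*((Ps+Pd)/Ps + /g)) -> dd Ps Pd s2 g < x ->
  - x / e1 + - kap Ps Pd s2 g x / e2 =
  - (g*s2/Ps) * ((Ps+Pd)/(Ps*e1) + / e2) + (- (/ e1 * (x - dd Ps Pd s2 g)) - Z2 / (4 * / e1) / (x - dd Ps Pd s2 g)).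
Proof.
  intros H1 H2 H3 H4 H5 H6 HZ Hx. subst Z2.
  assert (Hc : 0 < Ps^2*x - g*s2*(Ps+Pd)).
  { destruct (Rlt_or_le 0 (Ps^2*x - g*s2*(Ps+Pd))) as [H|H]; auto.
    apply (dd_iff Ps Pd s2 g x) in H; auto. lra. }
  assert (Hd : x - dd Ps Pd s2 g <> 0) by lra.
  unfold kap. unfold dd in *. field. repeat split; try lra.
Qed.

Lemma pointwise e1 e2 Ps Pd s2 g z x : 0 < e1 -> 0 < e2 -> 0 < Ps -> 0 < Pd -> 0 < s2 -> 0 < g ->
  z^2 = (2*g*s2/Ps)^2 * (/(e1*e2)*((Ps+Pd)/Ps + /g)) ->
  exp_pdf e1 x * inner e2 Ps Pd s2 g x =
  exp_pdf e1 x - / e1 * exp (- (g*s2/Ps) * ((Ps+Pd)/(Ps*e1) + / e2)) *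
     hh (/ e1) (z^2/(4 * / e1)) (x - dd Ps Pd s2 g).
Proof.
  intros H1 H2 H3 H4 H5 H6 HZ. unfold inner, hh.
  destruct (Rle_dec x (dd Ps Pd s2 g)) as [Hd|Hd].
  - destruct (Rlt_dec 0 (x - dd Ps Pd s2 g)); [lra|]. ring.
  - destruct (Rlt_dec 0 (x - dd Ps Pd s2 g)); [|lra].
    apply Rnot_le_lt in Hd.
    unfold exp_pdf.
    assert (Hq : exp (- x / e1) * exp (- kap Ps Pd s2 g x / e2) =
      exp (- (g*s2/Ps) * ((Ps+Pd)/(Ps*e1) + / e2)) *
      exp (- (/ e1 * (x - dd Ps Pd s2 g)) - z^2 / (4 * / e1) / (x - dd Ps Pd s2 g))).
    { rewrite <- !exp_plus. f_equal. apply expo; auto. }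
    replace (/ e1 * exp (- (g*s2/Ps) * ((Ps+Pd)/(Ps*e1) + / e2)) *
      exp (- (/ e1 * (x - dd Ps Pd s2 g)) - z^2 / (4 * / e1) / (x - dd Ps Pd s2 g)))
    with (/ e1 * (exp (- (g*s2/Ps) * ((Ps+Pd)/(Ps*e1) + / e2)) *
      exp (- (/ e1 * (x - dd Ps Pd s2 g)) - z^2 / (4 * / e1) / (x - dd Ps Pd s2 g)))) by ring.
    rewrite <- Hq. ring.
Qed.

Lemma outer e1 e2 Ps Pd s2 g z K : 0 < e1 -> 0 < e2 -> 0 < Ps -> 0 < Pd -> 0 < s2 -> 0 < g -> 0 < z ->
  z^2 = (2*g*s2/Ps)^2 * (/(e1*e2)*((Ps+Pd)/Ps + /g)) ->
  conv (fun b => RInt (hh (/ e1) (z^2/(4 * / e1))) 0 b) (z / / e1 * K) ->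
  improper_int0 (fun x => exp_pdf e1 x * inner e2 Ps Pd s2 g x)
    (1 - exp (- (g*s2/Ps) * ((Ps+Pd)/(Ps*e1) + / e2)) * z * K).
Proof.
  intros H1 H2 H3 H4 H5 H6 Hz HZ HC.
  set (E0 := exp (- (g*s2/Ps) * ((Ps+Pd)/(Ps*e1) + / e2))).
  set (h' := hh (/ e1) (z^2/(4 * / e1))). set (d := dd Ps Pd s2 g).
  assert (Hal : 0 < / e1) by (apply Rinv_0_lt_compat; auto).
  assert (Hbe : 0 < z^2/(4 * / e1)) by (apply Rdiv_lt_0_compat; nra).
  assert (Hdpos : 0 < d).
  { unfold d, dd. apply Rdiv_lt_0_compat; [|nra]. apply Rmult_lt_0_compat; nra. }
  assert (Hneg : RInt h' (- d) 0 = 0).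
  { rewrite (RInt_ext h' (fun _ => 0)).
    - rewrite RInt_const. apply (scal_zero_r (V:=R_NormedModule)).
    - intros x Hx. rewrite Rmax_right in Hx by lra. unfold h', hh.
      destruct (Rlt_dec 0 x); lra. }
  assert (Hint : forall b, is_RInt (fun x => exp_pdf e1 x * inner e2 Ps Pd s2 g x) 0 b
     ((1 - exp (- b / e1)) - / e1 * E0 * RInt h' 0 (b - d))).
  { intros b.
    assert (I1 := exp_pdf_int e1 0 b H1).
    replace (- 0 / e1) with 0 in I1 by (unfold Rdiv; ring). rewrite exp_0 in I1.
    assert (I2 : is_RInt (fun x => h' (x - d)) 0 b (RInt h' (- d) (b - d))).
    { apply is_RInt_ext with (fun y => scal 1 (h' (1 * y + - d))).
      - intros x _. replace (1 * x + - d) with (x - d) by ring. exact (scal_one (h' (x - d))).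
      - apply (is_RInt_comp_lin h' 1 (- d) 0 b).
        assert (E1 : 1 * 0 + - d = - d) by ring. assert (E2 : 1 * b + - d = b - d) by ring.
        rewrite E1, E2. apply (RInt_correct (V:=R_CompleteNormedModule)).
        unfold h'; apply hh_ex; auto. }
    assert (I3 := is_RInt_minus _ _ _ _ _ _ I1 (is_RInt_scal _ _ _ (/ e1 * E0) _ I2)).
    rewrite <- (RInt_Chasles h' (- d) 0 (b - d)) in I3 by (unfold h'; apply hh_ex; auto).
    assert (Ev : minus (1 - exp (- b / e1)) (scal (/ e1 * E0) (plus (RInt h' (- d) 0) (RInt h' 0 (b - d))))
      = 1 - exp (- b / e1) - / e1 * E0 * RInt h' 0 (b - d)).
    { rewrite Hneg. unfold minus, plus, opp, scal; simpl; unfold mult; simpl. ring. }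
    rewrite <- Ev.
    eapply is_RInt_ext; [|exact I3]. intros x _.
    symmetry. rewrite (pointwise e1 e2 Ps Pd s2 g z x) by auto. reflexivity.
    }
  apply bridge.
  - intros b _. eexists; apply Hint.
  - apply conv_ext with (fun b => (1 - exp (- b / e1)) - / e1 * E0 * RInt h' 0 (b - d)).
    + exists 0. intros b _. symmetry. apply is_RInt_unique. apply Hint.
    + assert (HA : conv (fun b => 1 + -1 * exp (- b / e1)) (1 + -1 * 0))
        by (apply conv_plus; [apply conv_const| apply conv_scal, conv_exp_neg; auto]).
      assert (HB := conv_scal _ _ (- (/ e1 * E0)) (conv_shift _ _ d HC)).
      assert (HS := conv_plus _ _ _ _ HA HB).
      replace (1 - E0 * z * K) with (1 + -1 * 0 + - (/ e1 * E0) * (z / / e1 * K))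
        by (field; lra).
      eapply conv_ext; [|exact HS]. exists 0. intros b _. cbv beta. fold h'. assert (Hq : forall q : R, 1 + -1 * exp (- b / e1) + - (/ e1 * E0) * q = 1 - exp (- b / e1) - / e1 * E0 * q) by (intros; ring). apply Hq.
Qed.

Theorem mainTheorem6 (e1 e2 Ps Pd sigma2 Rd : R) :
  0 < e1 -> 0 < e2 -> 0 < Ps -> 0 < Pd -> 0 < sigma2 -> 0 < Rd ->
  let gamma := Rpower 2 (2 * Rd) - 1 in
  let z := 2 * gamma * sigma2 / Ps *
           sqrt (/ (e1 * e2) * ((Ps + Pd) / Ps + / gamma)) in
  exists k : R, is_BesselK1 z k /\
    af_outage_prob_is e1 e2 Ps Pd sigma2 gamma
      (1 - exp (- (gamma * sigma2 / Ps) * ((Ps + Pd) / (Ps * e1) + / e2)) * z * k).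
Proof.
  intros He1 He2 HPs HPd Hs2 HRd gamma z.
  assert (Hg : 0 < gamma).
  { unfold gamma. assert (Rpower 2 0 < Rpower 2 (2 * Rd)) by (apply Rpower_lt; lra).
    rewrite Rpower_O in H by lra. lra. }
  assert (Harg : 0 < / (e1 * e2) * ((Ps + Pd) / Ps + / gamma)).
  { apply Rmult_lt_0_compat. apply Rinv_0_lt_compat; nra.
    assert (0 < (Ps + Pd) / Ps) by (apply Rdiv_lt_0_compat; lra).
    assert (0 < / gamma) by (apply Rinv_0_lt_compat; lra). lra. }
  assert (HA : 0 < 2 * gamma * sigma2 / Ps) by (apply Rdiv_lt_0_compat; nra).
  assert (Hz : 0 < z) by (unfold z; apply Rmult_lt_0_compat; auto; apply sqrt_lt_R0; auto).
  assert (HZ : z^2 = (2*gamma*sigma2/Ps)^2 * (/(e1*e2)*((Ps+Pd)/Ps + /gamma))).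
  { unfold z. rewrite Rpow_mult_distr. f_equal. simpl. rewrite Rmult_1_r.
    apply sqrt_sqrt. lra. }
  assert (Hal : 0 < / e1) by (apply Rinv_0_lt_compat; auto).
  destruct (core (/ e1) z Hal Hz) as [K [HB HC]].
  exists K. split; auto.
  exists (inner e2 Ps Pd sigma2 gamma). split.
  - intros x Hx. apply inner_ok; auto.
  - apply outer; auto.
Qed.
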